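(* Let $(G,r)$ be a symmetric group, $r(a,b)=({}^ab,a^b)$, and let $\Gamma=\{a\in G:\ {}^au=u\ \forall u\in G\}$. Then $\Gamma$ equals $\{a\in G: u^a=u\ \forall u\in G\}$, it is an abelian normal subgroup of $G$ invariant under the left and right actions of $G$ on itself, and, with $\widetilde{G}=G/\Gamma$ carrying the quotient symmetric group structure $r_{\widetilde G}(a\Gamma,b\Gamma)=({}^ab\,\Gamma,a^b\,\Gamma)$, the map $\varphi:\widetilde{G}\to[G]$, $a\Gamma\mapsto[a]$, is a well-defined isomorphism of symmetric sets from $(\widetilde{G},r_{\widetilde G})$ onto the retraction $\mathrm{Ret}(G,r)=([G],r_{[G]})$. In particular $[G]$ with multiplication $[a][b]=[ab]$ is a symmetric group and $\varphi$ is an isomorphism of symmetric groups.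
   Context: A symmetric group is a pair $(G,\sigma)$, $G$ a group, $\sigma(u,v)=({}^uv,u^v)$ an involutive bijection of $G\times G$ with ${}^a1=1,{}^1u=u,1^u=1,a^1=a$, ${}^{ab}u={}^a({}^bu)$, $a^{uv}=(a^u)^v$, ${}^a(uv)=({}^au)({}^{a^u}v)$, $(ab)^u=(a^{{}^bu})(b^u)$, $uv=({}^uv)(u^v)$; it is in particular a non-degenerate symmetric set (non-degenerate involutive set-theoretic solution of the Yang–Baxter equation). For a non-degenerate symmetric set $(X,r)$, $r(x,y)=({}^xy,x^y)$, define $x\sim y$ iff ${}^xz={}^yz$ for all $z\in X$; the retraction $\mathrm{Ret}(X,r)=([X],r_{[X]})$ is the set of classes $[X]=X/\sim$ with $r_{[X]}([x],[y])=([{}^xy],[x^y])$, a non-degenerate symmetric set. It is known (Takeuchi) that $(G/\Gamma, r_{\widetilde G})$ as in the claim is a well-defined symmetric group. *)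

(* Defs.v *)
From Stdlib Require Import ClassicalEpsilon.
Set Implicit Arguments.

Definition is_group (G : Type) (mul : G -> G -> G) (one : G) (inv : G -> G) : Prop :=
  (forall a b c, mul (mul a b) c = mul a (mul b c)) /\
  (forall a, mul one a = a) /\ (forall a, mul a one = a) /\
  (forall a, mul (inv a) a = one) /\ (forall a, mul a (inv a) = one).

Definition is_symgroup (G : Type) (mul : G -> G -> G) (one : G) (inv : G -> G)
    (lact ract : G -> G -> G) : Prop :=
  is_group mul one inv /\
  (* sigma is involutive (hence a bijection of G x G) *)
  (forall u v, lact (lact u v) (ract u v) = u /\ ract (lact u v) (ract u v) = v) /\
  (forall a, lact a one = one) /\ (forall u, lact one u = u) /\
  (forall u, ract one u = one) /\ (forall a, ract a one = a) /\
  (forall a b u, lact (mul a b) u = lact a (lact b u)) /\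
  (forall a u v, ract a (mul u v) = ract (ract a u) v) /\
  (forall a u v, lact a (mul u v) = mul (lact a u) (lact (ract a u) v)) /\
  (forall a b u, ract (mul a b) u = mul (ract a (lact b u)) (ract b u)) /\
  (forall u v, mul u v = mul (lact u v) (ract u v)).

Record symdata := SymData {
  carrier :> Type;
  smul : carrier -> carrier -> carrier;
  sone : carrier;
  sinv : carrier -> carrier;
  lact : carrier -> carrier -> carrier;   (* lact a u = ^a u *)
  ract : carrier -> carrier -> carrier }. (* ract a u = a^u  *)

Definition is_symmetric_group (S : symdata) : Prop :=
  is_symgroup (@smul S) (sone S) (@sinv S) (@lact S) (@ract S).

Section Constructions.
Variable S : symdata.

Definition Gamma (a : S) : Prop := forall u : S, lact S a u = u.

Definition coset (a : S) : S -> Prop := fun x => Gamma (smul S (sinv S a) x).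

Definition Tilde : Type := { X : S -> Prop | exists a, X = coset a }.
Definition mkTilde (a : S) : Tilde := exist _ (coset a) (ex_intro _ a eq_refl).
Definition repT (X : Tilde) : S :=
  proj1_sig (constructive_indefinite_description _ (proj2_sig X)).

Definition sim (x y : S) : Prop := forall z, lact S x z = lact S y z.
Definition cls (a : S) : S -> Prop := fun x => sim x a.
Definition Ret : Type := { X : S -> Prop | exists a, X = cls a }.
Definition mkRet (a : S) : Ret := exist _ (cls a) (ex_intro _ a eq_refl).
Definition repR (X : Ret) : S :=
  proj1_sig (constructive_indefinite_description _ (proj2_sig X)).

Definition rTilde (p : Tilde * Tilde) : Tilde * Tilde :=
  (mkTilde (lact S (repT (fst p)) (repT (snd p))),
   mkTilde (ract S (repT (fst p)) (repT (snd p)))).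
Definition mulTilde (X Y : Tilde) : Tilde := mkTilde (smul S (repT X) (repT Y)).

Definition rRet (p : Ret * Ret) : Ret * Ret :=
  (mkRet (lact S (repR (fst p)) (repR (snd p))),
   mkRet (ract S (repR (fst p)) (repR (snd p)))).
Definition lactRet (X Y : Ret) : Ret := fst (rRet (X, Y)).
Definition ractRet (X Y : Ret) : Ret := snd (rRet (X, Y)).
Definition mulRet (X Y : Ret) : Ret := mkRet (smul S (repR X) (repR Y)).
Definition oneRet : Ret := mkRet (sone S).
Definition invRet (X : Ret) : Ret := mkRet (sinv S (repR X)).

Definition phi (X : Tilde) : Ret := mkRet (repT X).

End Constructions.

(* Main.v *)
Require Import Defs.
From Stdlib Require Import ClassicalEpsilon.
From Stdlib Require Import FunctionalExtensionality PropExtensionality ProofIrrelevance.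

Local Notation "a ** b" := (smul _ a b) (at level 40, left associativity).
Local Notation "a ^-" := (sinv _ a) (at level 2).

Ltac unpack HS := let H := fresh in pose proof HS as H;
  destruct H as [[mA [m1l [m1r [mVl mVr]]]] [Hinv [L1 [L1u [R1 [Ra1 [LM [RM [LD [RD Mdec]]]]]]]]]].

Lemma cancel_l {S : symdata} (HS : is_symmetric_group S) (a b : S) : a^- ** (a ** b) = b.
Proof. unpack HS. rewrite <- mA, mVl, m1l. reflexivity. Qed.
Lemma cancel_r {S : symdata} (HS : is_symmetric_group S) (a b : S) : a ** (a^- ** b) = b.
Proof. unpack HS. rewrite <- mA, mVr, m1l. reflexivity. Qed.
Lemma inv_uniq {S : symdata} (HS : is_symmetric_group S) (a b : S) : a ** b = sone S -> b = a^-.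
Proof. unpack HS. intro H. rewrite <- (cancel_l HS a b), H, m1r. reflexivity. Qed.
Lemma inv_mul {S : symdata} (HS : is_symmetric_group S) (a b : S) : (a ** b)^- = b^- ** a^-.
Proof. unpack HS. symmetry. apply inv_uniq; auto. rewrite mA, cancel_r; auto. Qed.
Lemma inv_inv {S : symdata} (HS : is_symmetric_group S) (a : S) : (a^-)^- = a.
Proof. unpack HS. symmetry. apply inv_uniq; auto. Qed.

Lemma L_inv_r {S : symdata} (HS : is_symmetric_group S) (a u : S) : lact S a (lact S a^- u) = u.
Proof. unpack HS. rewrite <- LM, mVr, L1u. reflexivity. Qed.
Lemma L_inv_l {S : symdata} (HS : is_symmetric_group S) (a u : S) : lact S a^- (lact S a u) = u.
Proof. unpack HS. rewrite <- LM, mVl, L1u. reflexivity. Qed.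
Lemma R_inv_r {S : symdata} (HS : is_symmetric_group S) (a u : S) : ract S (ract S a u) u^- = a.
Proof. unpack HS. rewrite <- RM, mVr, Ra1. reflexivity. Qed.
Lemma R_expr {S : symdata} (HS : is_symmetric_group S) (u v : S) : ract S u v = (lact S u v)^- ** (u ** v).
Proof. unpack HS. rewrite (Mdec u v), cancel_l; auto. Qed.
Lemma L_expr {S : symdata} (HS : is_symmetric_group S) (u v : S) : lact S u v = (u ** v) ** (ract S u v)^-.
Proof. unpack HS. rewrite (Mdec u v), mA, mVr, m1r; auto. Qed.

Lemma G1 {S : symdata} (HS : is_symmetric_group S) : Gamma S (sone S).
Proof. unpack HS. intro u. apply L1u. Qed.
Lemma Gmul {S : symdata} (HS : is_symmetric_group S) a b : Gamma S a -> Gamma S b -> Gamma S (a ** b).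
Proof. unpack HS. intros Ha Hb u. rewrite LM, Hb, Ha. reflexivity. Qed.
Lemma Ginv {S : symdata} (HS : is_symmetric_group S) a : Gamma S a -> Gamma S (a^-).
Proof. intros Ha u. transitivity (lact S a^- (lact S a u)).
  f_equal; symmetry; apply Ha. apply L_inv_l; auto. Qed.
Lemma Gconj_L {S : symdata} (HS : is_symmetric_group S) a h : Gamma S a -> lact S h a = h ** (a ** h^-).
Proof. unpack HS. intro Ha.
  assert (E : forall v, lact S v (v^- ** (a ** v)) = a).
  { intro v. pose proof (proj1 (Hinv a v)) as H. rewrite (R_expr HS a v), Ha in H. exact H. }
  specialize (E h^-). rewrite inv_inv in E; auto.
  rewrite <- E at 1. rewrite L_inv_r; auto. Qed.
Lemma Gconj_R {S : symdata} (HS : is_symmetric_group S) a h : Gamma S a -> ract S a h = h^- ** (a ** h).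
Proof. intro Ha. rewrite (R_expr HS), Ha. reflexivity. Qed.
Lemma Gright {S : symdata} (HS : is_symmetric_group S) a u : Gamma S a -> ract S u a = u.
Proof. unpack HS. intro Ha. rewrite (R_expr HS), (Gconj_L HS _ _ Ha).
  rewrite !(inv_mul HS), (inv_inv HS), !mA, (cancel_l HS), mVl, m1r. reflexivity. Qed.
Lemma Gright_conv {S : symdata} (HS : is_symmetric_group S) a : (forall u, ract S u a = u) -> Gamma S a.
Proof. unpack HS. intro Ha.
  assert (E1 : forall u, lact S u a = (u ** a) ** u^-).
  { intro u. rewrite (L_expr HS), Ha. reflexivity. }
  assert (E2 : forall u, lact S u a = ract S a u^-).
  { intro u. pose proof (proj2 (Hinv u a)) as H. rewrite Ha in H.
    rewrite <- H at 2. rewrite R_inv_r; auto. }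
  assert (E3 : forall h, ract S a h = h^- ** (a ** h)).
  { intro h. rewrite <- (inv_inv HS h) at 1. rewrite <- E2, E1, inv_inv, mA; auto. }
  intro u. rewrite (L_expr HS), E3, !(inv_mul HS), inv_inv, !mA, !(cancel_r HS); auto. Qed.
Lemma Gnormal {S : symdata} (HS : is_symmetric_group S) g a : Gamma S a -> Gamma S (g ** (a ** g^-)).
Proof. unpack HS. intros Ha u. rewrite !LM, Ha, L_inv_r; auto. Qed.
Lemma Gnormal2 {S : symdata} (HS : is_symmetric_group S) g a : Gamma S a -> Gamma S (g^- ** (a ** g)).
Proof. intro Ha. pose proof (Gnormal HS g^- a Ha) as H. rewrite inv_inv in H; auto. Qed.
Lemma Gcomm {S : symdata} (HS : is_symmetric_group S) a b : Gamma S a -> Gamma S b -> a ** b = b ** a.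
Proof. intros Ha Hb. pose proof (Gconj_R HS a b Ha) as H. rewrite (Gright HS b a Hb) in H.
  rewrite H at 2. rewrite cancel_r; auto. Qed.

Definition Eq {S : symdata} (x y : S) : Prop := Gamma S (x^- ** y).

Lemma E_refl {S : symdata} (HS : is_symmetric_group S) (x : S) : Eq x x.
Proof. unpack HS. unfold Eq. rewrite mVl. apply (G1 HS). Qed.
Lemma E_sym {S : symdata} (HS : is_symmetric_group S) (x y : S) : Eq x y -> Eq y x.
Proof. unfold Eq. intro H. apply (Ginv HS) in H. rewrite (inv_mul HS), (inv_inv HS) in H. exact H. Qed.
Lemma E_trans {S : symdata} (HS : is_symmetric_group S) (x y z : S) : Eq x y -> Eq y z -> Eq x z.
Proof. unpack HS. unfold Eq. intros H1 H2. pose proof (Gmul HS _ _ H1 H2) as H.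
  rewrite mA, (cancel_r HS) in H. exact H. Qed.
Lemma sim_E {S : symdata} (HS : is_symmetric_group S) (x y : S) : sim S x y <-> Eq x y.
Proof. unpack HS. unfold Eq, sim. split.
  - intros H u. rewrite LM, <- H, (L_inv_l HS). reflexivity.
  - intros H z. rewrite <- (cancel_r HS x y). rewrite LM, H. reflexivity. Qed.
Lemma E_split {S : symdata} (HS : is_symmetric_group S) (x y : S) : y = x ** (x^- ** y).
Proof. rewrite (cancel_r HS). reflexivity. Qed.

Lemma cong_mul0 {S : symdata} (HS : is_symmetric_group S) (x y c d : S) :
  Gamma S c -> Gamma S d -> Eq (x ** y) ((x ** c) ** (y ** d)).
Proof. unpack HS. intros Hc Hd. unfold Eq. rewrite (inv_mul HS), !mA, (cancel_l HS).
  replace (y^- ** (c ** (y ** d))) with ((y^- ** (c ** y)) ** d) by (rewrite !mA; reflexivity).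
  apply (Gmul HS); auto. apply (Gnormal2 HS); auto. Qed.
Lemma cong_inv0 {S : symdata} (HS : is_symmetric_group S) (x c : S) :
  Gamma S c -> Eq (x^-) ((x ** c)^-).
Proof. unpack HS. intros Hc. unfold Eq. rewrite (inv_inv HS), (inv_mul HS).
  apply (Gnormal HS). apply (Ginv HS); auto. Qed.
Lemma cong_L0 {S : symdata} (HS : is_symmetric_group S) (x y c d : S) :
  Gamma S c -> Gamma S d -> Eq (lact S x y) (lact S (x ** c) (y ** d)).
Proof. unpack HS. intros Hc Hd. unfold Eq. rewrite LM, Hc, LD, (Gconj_L HS _ _ Hd), (cancel_l HS).
  apply (Gnormal HS); auto. Qed.
Lemma cong_R0 {S : symdata} (HS : is_symmetric_group S) (x y c d : S) :
  Gamma S c -> Gamma S d -> Eq (ract S x y) (ract S (x ** c) (y ** d)).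
Proof. unpack HS. intros Hc Hd. unfold Eq. rewrite RM, (Gright HS _ _ Hd), RD, Hc,
  (Gconj_R HS _ _ Hc), (cancel_l HS).
  apply (Gnormal2 HS); auto. Qed.

Lemma cong_mul {S : symdata} (HS : is_symmetric_group S) (x y x' y' : S) :
  Eq x x' -> Eq y y' -> Eq (x ** y) (x' ** y').
Proof. intros H1 H2. rewrite (E_split HS x x'), (E_split HS y y'). apply cong_mul0; auto. Qed.
Lemma cong_inv {S : symdata} (HS : is_symmetric_group S) (x x' : S) :
  Eq x x' -> Eq (x^-) (x'^-).
Proof. intros H1. rewrite (E_split HS x x'). apply cong_inv0; auto. Qed.
Lemma cong_L {S : symdata} (HS : is_symmetric_group S) (x y x' y' : S) :
  Eq x x' -> Eq y y' -> Eq (lact S x y) (lact S x' y').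
Proof. intros H1 H2. rewrite (E_split HS x x'), (E_split HS y y'). apply cong_L0; auto. Qed.
Lemma cong_R {S : symdata} (HS : is_symmetric_group S) (x y x' y' : S) :
  Eq x x' -> Eq y y' -> Eq (ract S x y) (ract S x' y').
Proof. intros H1 H2. rewrite (E_split HS x x'), (E_split HS y y'). apply cong_R0; auto. Qed.

Lemma sig_eq {A : Type} {P : A -> Prop} (x y : sig P) : proj1_sig x = proj1_sig y -> x = y.
Proof. destruct x as [x px], y as [y py]; simpl. intros ->. f_equal. apply proof_irrelevance. Qed.

Lemma mkRet_eq {S : symdata} (HS : is_symmetric_group S) (a b : S) : mkRet S a = mkRet S b <-> Eq a b.
Proof. split.
  - intro H. apply (f_equal (@proj1_sig _ _)) in H. simpl in H.
    assert (cls S a a) by (unfold cls, sim; reflexivity).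
    rewrite H in H0. unfold cls in H0. apply (sim_E HS) in H0. exact H0.
  - intro H. apply sig_eq. simpl. apply functional_extensionality. intro x.
    apply propositional_extensionality. unfold cls. rewrite !(sim_E HS). split; intro.
    + apply (E_trans HS _ a); auto.
    + apply (E_trans HS _ b); auto. apply E_sym; auto. Qed.
Lemma Ret_rep {S : symdata} (X : Ret S) : X = mkRet S (repR X).
Proof. apply sig_eq. simpl. unfold repR.
  destruct (constructive_indefinite_description _ _). simpl. exact e. Qed.
Lemma Ret_surj {S : symdata} (X : Ret S) : exists a, X = mkRet S a.
Proof. exists (repR X). apply Ret_rep. Qed.
Lemma repR_mk {S : symdata} (HS : is_symmetric_group S) (a : S) : Eq (repR (mkRet S a)) a.
Proof. apply (mkRet_eq HS). symmetry. apply Ret_rep. Qed.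

Lemma mkTilde_eq {S : symdata} (HS : is_symmetric_group S) (a b : S) : mkTilde S a = mkTilde S b <-> Eq a b.
Proof. split.
  - intro H. apply (f_equal (@proj1_sig _ _)) in H. simpl in H.
    assert (coset S b b) by (apply (E_refl HS)).
    rewrite <- H in H0. exact H0.
  - intro H. apply sig_eq. simpl. apply functional_extensionality. intro x.
    apply propositional_extensionality. unfold coset. change (Eq a x <-> Eq b x). split; intro.
    + apply (E_trans HS _ a); auto. apply E_sym; auto.
    + apply (E_trans HS _ b); auto. Qed.
Lemma Tilde_rep {S : symdata} (X : Tilde S) : X = mkTilde S (repT X).
Proof. apply sig_eq. simpl. unfold repT.
  destruct (constructive_indefinite_description _ _). simpl. exact e. Qed.
Lemma Tilde_surj {S : symdata} (X : Tilde S) : exists a, X = mkTilde S a.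
Proof. exists (repT X). apply Tilde_rep. Qed.
Lemma repT_mk {S : symdata} (HS : is_symmetric_group S) (a : S) : Eq (repT (mkTilde S a)) a.
Proof. apply (mkTilde_eq HS). symmetry. apply Tilde_rep. Qed.

Lemma phi_mk {S : symdata} (HS : is_symmetric_group S) (a : S) : phi (mkTilde S a) = mkRet S a.
Proof. unfold phi. apply (mkRet_eq HS). apply repT_mk; auto. Qed.
Lemma mulRet_mk {S : symdata} (HS : is_symmetric_group S) (a b : S) :
  mulRet (mkRet S a) (mkRet S b) = mkRet S (a ** b).
Proof. unfold mulRet. apply (mkRet_eq HS). apply cong_mul; auto; apply repR_mk; auto. Qed.
Lemma invRet_mk {S : symdata} (HS : is_symmetric_group S) (a : S) :
  invRet (mkRet S a) = mkRet S (a^-).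
Proof. unfold invRet. apply (mkRet_eq HS). apply cong_inv; auto; apply repR_mk; auto. Qed.
Lemma lactRet_mk {S : symdata} (HS : is_symmetric_group S) (a b : S) :
  lactRet (mkRet S a) (mkRet S b) = mkRet S (lact S a b).
Proof. unfold lactRet, rRet; simpl. apply (mkRet_eq HS). apply cong_L; auto; apply repR_mk; auto. Qed.
Lemma ractRet_mk {S : symdata} (HS : is_symmetric_group S) (a b : S) :
  ractRet (mkRet S a) (mkRet S b) = mkRet S (ract S a b).
Proof. unfold ractRet, rRet; simpl. apply (mkRet_eq HS). apply cong_R; auto; apply repR_mk; auto. Qed.
Lemma mulTilde_mk {S : symdata} (HS : is_symmetric_group S) (a b : S) :
  mulTilde (mkTilde S a) (mkTilde S b) = mkTilde S (a ** b).
Proof. unfold mulTilde. apply (mkTilde_eq HS). apply cong_mul; auto; apply repT_mk; auto. Qed.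
Lemma rTilde_mk {S : symdata} (HS : is_symmetric_group S) (a b : S) :
  rTilde (mkTilde S a, mkTilde S b) = (mkTilde S (lact S a b), mkTilde S (ract S a b)).
Proof. unfold rTilde; simpl. f_equal; apply (mkTilde_eq HS);
  [apply cong_L | apply cong_R]; auto; apply repT_mk; auto. Qed.
Theorem mainTheorem4 (S : symdata) (HS : is_symmetric_group S) :
  (* Gamma = { a | u^a = u for all u } *)
  (forall a : S, Gamma S a <-> (forall u : S, ract S u a = u)) /\
  (* Gamma is a subgroup *)
  Gamma S (sone S) /\
  (forall a b : S, Gamma S a -> Gamma S b -> Gamma S (smul S a b)) /\
  (forall a : S, Gamma S a -> Gamma S (sinv S a)) /\
  (* abelian *)
  (forall a b : S, Gamma S a -> Gamma S b -> smul S a b = smul S b a) /\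
  (* normal *)
  (forall g a : S, Gamma S a -> Gamma S (smul S (smul S g a) (sinv S g))) /\
  (* invariant under the left and right actions *)
  (forall u a : S, Gamma S a -> Gamma S (lact S u a) /\ Gamma S (ract S a u)) /\
  (* phi is well defined: phi(a Gamma) = [a] *)
  (forall a : S, phi (mkTilde S a) = mkRet S a) /\
  (* phi is bijective *)
  (forall X Y : Tilde S, phi X = phi Y -> X = Y) /\
  (forall Z : Ret S, exists X : Tilde S, phi X = Z) /\
  (* phi is a morphism of symmetric sets *)
  (forall X Y : Tilde S,
     (phi (fst (rTilde (X, Y))), phi (snd (rTilde (X, Y)))) = rRet (phi X, phi Y)) /\
  (* [G] with [a][b] = [ab] is a symmetric group *)
  is_symgroup (@mulRet S) (oneRet S) (@invRet S) (@lactRet S) (@ractRet S) /\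
  (* phi is a group homomorphism, hence an isomorphism of symmetric groups *)
  (forall X Y : Tilde S, phi (mulTilde X Y) = mulRet (phi X) (phi Y)).
Proof.
  pose proof HS as HS'. unpack HS'.
  split. { intro a. split. intros Ha u. apply (Gright HS); auto. apply (Gright_conv HS). }
  split. { apply (G1 HS). }
  split. { intros; apply (Gmul HS); auto. }
  split. { intros; apply (Ginv HS); auto. }
  split. { intros; apply (Gcomm HS); auto. }
  split. { intros g a Ha. rewrite mA. apply (Gnormal HS); auto. }
  split. { intros u a Ha. split.
    - rewrite (Gconj_L HS _ _ Ha). apply (Gnormal HS); auto.
    - rewrite (Gconj_R HS _ _ Ha). apply (Gnormal2 HS); auto. }
  split. { intro a. apply (phi_mk HS). }
  split. { intros X Y. destruct (Tilde_surj X) as [x ->]. destruct (Tilde_surj Y) as [y ->].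
    rewrite !(phi_mk HS), (mkRet_eq HS), (mkTilde_eq HS). auto. }
  split. { intro Z. destruct (Ret_surj Z) as [z ->]. exists (mkTilde S z). apply (phi_mk HS). }
  split. { intros X Y. destruct (Tilde_surj X) as [x ->]. destruct (Tilde_surj Y) as [y ->].
    rewrite (rTilde_mk HS); simpl. rewrite !(phi_mk HS).
    change (rRet (mkRet S x, mkRet S y)) with (lactRet (mkRet S x) (mkRet S y), ractRet (mkRet S x) (mkRet S y)).
    rewrite (lactRet_mk HS), (ractRet_mk HS). reflexivity. }
  split.
  { unfold is_symgroup, is_group. unfold oneRet.
    repeat split; intros;
    repeat match goal with X : Ret S |- _ => destruct (Ret_surj X) as [? ->] end;
    repeat first [rewrite (mulRet_mk HS) | rewrite (invRet_mk HS) | rewrite (lactRet_mk HS) | rewrite (ractRet_mk HS)];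
    try split; f_equal; auto; try apply Hinv. }
  { intros X Y. destruct (Tilde_surj X) as [x ->]. destruct (Tilde_surj Y) as [y ->].
    rewrite (mulTilde_mk HS), !(phi_mk HS), (mulRet_mk HS). reflexivity. }
Qed.
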